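(* For $n,m\in\mathbb{N}$ and $i\in I_{nm}$ one has $h_n(\sigma_{m,n}(i))=\sigma_{m,n}(h_{nm}(i))$.
   Context: $\Gamma_0(N)=\{\begin{pmatrix}a&b\\c&d\end{pmatrix}\in SL(2,\mathbb{Z}):N\mid c\}$. $I_N=\{[x:y]_N:\gcd(x,y,N)=1\}$, $[x:y]_N$ the class of $(x,y)$ under $(x,y)\sim(kx,ky)\bmod N$, $\gcd(k,N)=1$; the right coset $\Gamma_0(N)\begin{pmatrix}a&b\\c&d\end{pmatrix}$ is identified with $[c:d]_N\in I_N$, and $R_i^{N,1}$ denotes a representative of coset $i$. $\sigma_{m,n}:I_{nm}\to I_n$ is the projection $[x:y]_{nm}\mapsto[x:y]_n$ (induced by $\Gamma_0(nm)g\mapsto\Gamma_0(n)g$). For $i\in I_N$, $A_i=\begin{pmatrix}c&b\\0&N/c\end{pmatrix}$ where $(c,b)$ (with $c\ge1$, $c\mid N$, $0\le b\le N/c-1$, $\gcd(c,b,N/c)=1$) is the pair mapped to $i$ by $(c,b)\mapsto[c:d_N(c,b)]_N$, $d_N(c,b)=\min_{0\le k\le c-1}\{c+b+kN/c:\gcd(c,b+kN/c)=1\}$ (a bijection). $h_N:I_N\to I_N$ sends $i$ to the unique $l\in I_N$ with $\begin{pmatrix}0&1\\-N&0\end{pmatrix}R_i^{N,1}\in SL(2,\mathbb{Z})A_l$. *)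

(* Defs.v *)
From mathcomp Require Import all_boot all_order all_algebra.
From Stdlib Require Import ClassicalEpsilon.
Set Implicit Arguments. Unset Strict Implicit. Unset Printing Implicit Defensive.
Import Order.TTheory GRing.Theory Num.Theory.
Local Open Scope ring_scope.

(* A subset of Z^2; elements of I_N are equivalence classes, i.e. such sets. *)
Definition pairset := int * int -> Prop.

Definition P1rel (N : nat) (p q : int * int) : Prop :=
  exists k : int, coprimez k N /\
    (q.1 == k * p.1 %[mod N])%Z /\ (q.2 == k * p.2 %[mod N])%Z.

Definition primN (N : nat) (p : int * int) : Prop :=
  gcdz (gcdz p.1 p.2) N = 1%N.

Definition cls (N : nat) (p : int * int) : pairset := fun q => P1rel N p q.

Definition IN (N : nat) (C : pairset) : Prop :=
  exists p, primN N p /\ C = cls N p.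

(* sigma_{m,n} : I_{nm} -> I_n, [x:y]_{nm} |-> [x:y]_n
   (the n-class containing the elements of the given nm-class) *)
Definition sigma (m n : nat) (C : pairset) : pairset :=
  fun q => exists p, C p /\ P1rel n p q.

Definition mx2 (a b c d : int) : 'M[int]_2 :=
  \matrix_(i < 2, j < 2)
    (if i == ord0 then (if j == ord0 then a else b)
     else (if j == ord0 then c else d)).

Definition SL2Z (M : 'M[int]_2) : Prop := \det M = 1.

(* d_N(c,b) = min_{0<=k<=c-1} { c + b + k N/c : gcd(c, b + k N/c) = 1 };
   since c + b + k N/c is increasing in k, the min is at the least such k. *)
Definition dN (N c b : nat) : nat :=
  let k := find (fun k => coprime c (b + k * (N %/ c))) (iota 0 c) in
  (c + b + k * (N %/ c))%N.

Definition goodpair (N : nat) (cb : nat * nat) : Prop :=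
  let: (c, b) := cb in
  [/\ (1 <= c)%N, (c %| N)%N, (b <= N %/ c - 1)%N & gcdn (gcdn c b) (N %/ c) = 1%N].

Definition Apair (N : nat) (l : pairset) : nat * nat :=
  epsilon (inhabits (1%N, 0%N))
    (fun cb => goodpair N cb /\ cls N ((cb.1)%:Z, (dN N cb.1 cb.2)%:Z) = l).

Definition Amat (N : nat) (l : pairset) : 'M[int]_2 :=
  let: (c, b) := Apair N l in mx2 c%:Z b%:Z 0 (N %/ c)%N%:Z.

(* R_i^{N,1}: a representative in SL(2,Z) of the coset i, i.e. its bottom
   row (c,d) satisfies [c:d]_N = i. *)
Definition Rrep (N : nat) (C : pairset) : 'M[int]_2 :=
  epsilon (inhabits (1%:M : 'M[int]_2))
    (fun R => SL2Z R /\ C (R ord_max ord0, R ord_max ord_max)).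

Definition WN (N : nat) : 'M[int]_2 := mx2 0 1 (- (N%:Z)) 0.

Definition hN (N : nat) (C : pairset) : pairset :=
  epsilon (inhabits (fun _ => False) : inhabited pairset)
    (fun l => IN N l /\ exists S, SL2Z S /\ WN N *m Rrep N C = S *m Amat N l).

(* Main.v *)
Require Import Defs.
From mathcomp Require Import all_boot all_order all_algebra.
From mathcomp Require Import zify ring lra.
From Stdlib Require Import ClassicalEpsilon FunctionalExtensionality PropExtensionality.
Set Implicit Arguments. Unset Strict Implicit. Unset Printing Implicit Defensive.
Import Order.TTheory GRing.Theory Num.Theory.
Local Open Scope ring_scope.

Lemma dvdzW (d m : int) : (d %| m)%Z <-> exists q, m = q * d.
Proof. by split => [/dvdzP|/dvdzP]. Qed.

Lemma cpW (a b : int) : coprimez a b <-> exists u v, u * a + v * b = 1.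
Proof.
split => [/coprimezP [[u v] /= H]|[u [v H]]]; first by exists u, v.
by apply/coprimezP; exists (u, v).
Qed.

Lemma lin1 (A B L R c : int) : A = B -> L - R = c * (A - B) -> L = R.
Proof. by move=> -> /eqP; rewrite subrr mulr0 subr_eq0 => /eqP. Qed.
Lemma lin2 (A B A' B' L R c c' : int) : A = B -> A' = B' ->
  L - R = c * (A - B) + c' * (A' - B') -> L = R.
Proof. by move=> -> -> /eqP; rewrite !subrr !mulr0 addr0 subr_eq0 => /eqP. Qed.
Lemma lin3 (A B A' B' A'' B'' L R c c' c'' : int) : A = B -> A' = B' -> A'' = B'' ->
  L - R = c * (A - B) + c' * (A' - B') + c'' * (A'' - B'') -> L = R.
Proof. by move=> -> -> -> /eqP; rewrite !subrr !mulr0 !addr0 subr_eq0 => /eqP. Qed.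

Lemma P1E N p q : P1rel N p q <->
  exists k, coprimez k N /\ (exists s : int, q.1 - k * p.1 = s * N%:Z) /\
                            (exists t : int, q.2 - k * p.2 = t * N%:Z).
Proof.
rewrite /P1rel; split => [[k [Hk [H1 H2]]]|[k [Hk [H1 H2]]]]; exists k; split => //.
  rewrite !eqz_mod_dvd in H1 H2. split; [exact/dvdzP | exact/dvdzP].
by rewrite !eqz_mod_dvd; split; apply/dvdzP.
Qed.

Lemma P1_refl N p : P1rel N p p.
Proof.
apply/P1E; exists 1; split; first by apply/cpW; exists 1, 0; ring.
by split; exists 0; ring.
Qed.

Lemma P1_sym N p q : P1rel N p q -> P1rel N q p.
Proof.
move/P1E => [k [/cpW [u [v Huv]] [[s Hs] [t Ht]]]].
apply/P1E; exists u; split; first by apply/cpW; exists k, v; rewrite -Huv; ring.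
split.
  exists (- (u * s) + v * p.1).
  by apply: (lin2 (c := - u) (c' := - p.1) Hs Huv); ring.
exists (- (u * t) + v * p.2).
by apply: (lin2 (c := - u) (c' := - p.2) Ht Huv); ring.
Qed.

Lemma P1_trans N p q r : P1rel N p q -> P1rel N q r -> P1rel N p r.
Proof.
move/P1E => [k [Hk [[s Hs] [t Ht]]]] /P1E [k' [Hk' [[s' Hs'] [t' Ht']]]].
apply/P1E; exists (k' * k); split; first by rewrite coprimezMl Hk Hk'.
split.
  exists (s' + k' * s).
  by apply: (lin2 (c := 1) (c' := k') Hs' Hs); ring.
exists (t' + k' * t).
by apply: (lin2 (c := 1) (c' := k') Ht' Ht); ring.
Qed.

Lemma cls_eq N p q : P1rel N p q -> cls N p = cls N q.
Proof.
move=> H; apply: functional_extensionality => r; apply: propositional_extensionality.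
rewrite /cls; split => H'; first exact: P1_trans (P1_sym H) H'.
exact: P1_trans H H'.
Qed.

Lemma sigma_cls n m p : sigma m n (cls (n * m) p) = cls n p.
Proof.
apply: functional_extensionality => r; apply: propositional_extensionality.
rewrite /sigma /cls; split => [[q [Hq Hr]]|Hr]; last by exists p; split => //; exact: P1_refl.
apply: P1_trans Hr; move/P1E: Hq => [k [Hk [[s Hs] [t Ht]]]].
apply/P1E; exists k; split; first by move: Hk; rewrite PoszM coprimezMr => /andP[].
by split; [exists (s * m) | exists (t * m)]; rewrite ?Hs ?Ht PoszM; ring.
Qed.

Lemma keyG (N : nat) (M g x y x' y' k0 : int) : N%:Z = M * g ->
  (exists a : int, x' - k0 * x = a * N%:Z) -> (exists b : int, x = b * g) ->
  (exists r : int, y' - k0 * y = r * M) ->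
  coprimez y g -> coprimez y' g -> coprimez k0 M -> P1rel N (x, y) (x', y').
Proof.
move=> HN [a Ha] [b Hb] [r Hr] /cpW [w [z Hwz]] /cpW [w' [z' Hwz']] /cpW [u0 [v0 Huv]].
set k := k0 + M * (r * w).
apply/P1E; exists k; split.
  rewrite HN coprimezMr; apply/andP; split; apply/cpW.
    exists u0, (v0 - u0 * (r * w)).
    by apply: (lin1 (c := 1) Huv); rewrite /k; ring.
  exists (w' * y), (w' * r * z * M + z').
  have Ey : y' = k * y + r * z * M * g.
    by apply: (lin2 (c := 1) (c' := - (r * M)) Hr Hwz); rewrite /k; ring.
  by apply: (lin2 (c := - w') (c' := 1) Ey Hwz'); ring.
split => /=.
  exists (a - r * w * b).
  by apply: (lin3 (c := 1) (c' := - (M * r * w)) (c'' := r * w * b) Ha Hb HN); rewrite /k; ring.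
exists (r * z).
by apply: (lin3 (c := 1) (c' := - (r * M)) (c'' := - (r * z)) Hr Hwz HN); rewrite /k; ring.
Qed.

Lemma GL (Y x s : nat) : (0 < Y)%N -> coprime (gcdn Y x) s ->
  exists t : nat, coprime Y (x + t * s).
Proof.
move=> Y0 Hc.
exists (\prod_(p <- primes Y | ~~ (p %| x)%N) p).
set t := \prod_(_ <- _ | _) _.
apply/negPn/negP => Hnc.
set q := gcdn Y (x + t * s).
have q0 : (0 < q)%N by rewrite gcdn_gt0 Y0.
have q1 : (1 < q)%N by move: Hnc; rewrite /coprime -/q; lia.
have pp := pdiv_prime q1.
have pq := pdiv_dvd q.
have pY : (pdiv q %| Y)%N by apply: dvdn_trans pq (dvdn_gcdl _ _).
have pxt : (pdiv q %| x + t * s)%N by apply: dvdn_trans pq (dvdn_gcdr _ _).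
have Ht : (pdiv q %| t)%N = ~~ (pdiv q %| x)%N.
  rewrite /t Euclid_dvd_prod // big_has_cond.
  apply/hasP/idP => [[p' /[swap] /= /andP[np'x pp'] ]|npx].
    rewrite mem_primes => /and3P[p'p _ _].
    by move: pp'; rewrite dvdn_prime2 // => /eqP ->.
  by exists (pdiv q); rewrite ?mem_primes ?pp ?Y0 ?pY //= npx dvdnn.
case: (boolP (pdiv q %| x)%N) => px.
  move: pxt; rewrite dvdn_addr // Euclid_dvdM // Ht px /= => ps.
  have : (pdiv q %| gcdn (gcdn Y x) s)%N by rewrite !dvdn_gcd pY px ps.
  by rewrite (eqP Hc) dvdn1 => /eqP H1; move: pp; rewrite H1.
have pts : (pdiv q %| t * s)%N by apply: dvdn_mulr; rewrite Ht.
by move: pxt; rewrite dvdn_addl // (negbTE px).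
Qed.

Lemma dN_cop (N c b : nat) : (0 < c)%N -> coprime (gcdn c b) (N %/ c) ->
  coprime c (dN N c b).
Proof.
move=> c0 Hc; have [t Ht] := GL c0 Hc.
set P := fun k => coprime c (b + k * (N %/ c)).
have HP : forall k, P k = P (k %% c)%N.
  move=> k; rewrite /P /coprime -gcdn_modr -[in RHS]gcdn_modr.
  by rewrite -modnDmr -modnMml modnDmr.
have Hhas : has P (iota 0 c).
  apply/hasP; exists (t %% c)%N; first by rewrite mem_iota add0n ltn_mod c0.
  by rewrite -HP.
have := nth_find 0 Hhas; rewrite has_find size_iota in Hhas.
rewrite nth_iota // add0n /P /dN /= => H.
by rewrite -addnA /coprime gcdnDl.
Qed.

Lemma dN_form N c b : exists j : nat, dN N c b = (c + b + j * (N %/ c))%N.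
Proof. by exists (find (fun k => coprime c (b + k * (N %/ c))) (iota 0 c)). Qed.

Lemma P1_dvd N (a a' : nat) D D' : P1rel N (a%:Z, D) (a'%:Z, D') -> (a %| N)%N -> (a %| a')%N.
Proof.
move=> /P1E [k [_ [[s Hs] _]]] /divnK HN.
have : (a%:Z %| a'%:Z)%Z.
  apply/dvdzW; exists (k + s * (N %/ a)%N%:Z).
  have HN' : (N %/ a)%N%:Z * a%:Z = N%:Z by rewrite -PoszM HN.
  rewrite /= in Hs; apply: (lin2 (c := 1) (c' := - s) Hs HN'); ring.
by rewrite dvdzE.
Qed.

Lemma pair_inj (N c b c' b' : nat) : (0 < N)%N -> goodpair N (c, b) -> goodpair N (c', b') ->
  P1rel N (c%:Z, (dN N c b)%:Z) (c'%:Z, (dN N c' b')%:Z) -> c = c' /\ b = b'.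
Proof.
move=> N0 [c0 cN bM _] [c0' cN' bM' _] H.
have Ecc : c = c'.
  apply/eqP; rewrite eqn_dvd (P1_dvd H cN) (P1_dvd (P1_sym H) cN') //.
subst c'; split => //.
set M := (N %/ c)%N.
have HN : N = (M * c)%N by rewrite divnK.
have M0 : (0 < M)%N by move: N0; rewrite HN muln_gt0 => /andP[].
have [j Hj] := dN_form N c b; have [j' Hj'] := dN_form N c b'.
move: H; rewrite Hj Hj' -/M HN => /P1_sym /P1E [k [_ [[s Hs] [t Ht]]]].
rewrite /= !PoszD !PoszM in Hs Ht.
have Hk : 1 - k = s * M%:Z.
  apply: (mulIf (x := c%:Z)); first by rewrite eqz_nat -lt0n.
  by apply: (lin1 (c := 1) Hs); ring.
have Hq : b%:Z - b'%:Z = M%:Z * (- s * (c%:Z + b'%:Z + j'%:Z * M%:Z) + t * c%:Z - j%:Z + j'%:Z).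
  by apply: (lin2 (c := 1) (c' := - (c%:Z + b'%:Z + j'%:Z * M%:Z)) Ht Hk); ring.
have bM1 : (b < M)%N by rewrite -/M in bM; lia.
have bM1' : (b' < M)%N by rewrite -/M in bM'; lia.
move: Hq; set q := (X in M%:Z * X) => Hq.
have Mz : 0 < M%:Z by rewrite ltz_nat.
have h1 : 0 < q -> M%:Z <= M%:Z * q.
  by move=> q0; rewrite -{1}[M%:Z]mulr1 ler_pM2l //; lia.
have h2 : q < 0 -> M%:Z * q <= - M%:Z.
  by move=> q0; rewrite -mulrN1 ler_pM2l //; lia.
have : q = 0 by lia.
by move=> q0; move: Hq; rewrite q0 mulr0 => /eqP; rewrite subr_eq0 => /eqP [].
Qed.

Lemma dvd_lin (q a b x y : int) : (q %| a)%Z -> (q %| b)%Z -> (q %| x * a + y * b)%Z.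
Proof. by move=> Ha Hb; rewrite rpredD // dvdz_mull. Qed.

Lemma gcd3_one (a b c : nat) :
  (forall q : nat, (q%:Z %| a%:Z)%Z -> (q%:Z %| b%:Z)%Z -> (q%:Z %| c%:Z)%Z -> (q%:Z %| 1)%Z) ->
  gcdn (gcdn a b) c = 1%N.
Proof.
move=> H; have := H (gcdn (gcdn a b) c).
rewrite !dvdzE !absz_nat dvdn1 => H'; apply/eqP; apply: H'.
- exact: dvdn_trans (dvdn_gcdl _ _) (dvdn_gcdl _ _).
- exact: dvdn_trans (dvdn_gcdl _ _) (dvdn_gcdr _ _).
- exact: dvdn_gcdr.
Qed.

Lemma gdec (N : nat) (c : int) : (0 < N)%N -> exists (g M : nat) (c' u v : int),
  [/\ (0 < g)%N, (0 < M)%N, N = (M * g)%N, c = c' * g%:Z & u * c' + v * M%:Z = 1].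
Proof.
move=> N0; set g := gcdn `|c| N.
have g0 : (0 < g)%N by rewrite gcdn_gt0 N0 orbT.
have gN : (g %| N)%N by exact: dvdn_gcdr.
have gc : (g%:Z %| c)%Z by rewrite dvdzE absz_nat dvdn_gcdl.
set M := (N %/ g)%N.
have HN : N = (M * g)%N by rewrite divnK.
have M0 : (0 < M)%N by move: N0; rewrite HN muln_gt0 => /andP[].
have [u [v Huv]] := Bezoutz c N.
exists g, M, (c %/ g)%Z, u, v; split => //; first by rewrite divzK.
apply: (mulIf (x := g%:Z)); first by rewrite eqz_nat -lt0n.
rewrite mul1r mulrDl -mulrA divzK // -mulrA -PoszM -HN Huv.
by rewrite /gcdz absz_nat.
Qed.

Lemma mkbeta (M : nat) (z : int) : (0 < M)%N ->
  exists (b : nat) (w : int), (b < M)%N /\ b%:Z = z - w * M%:Z.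
Proof.
move=> M0; have Mz : M%:Z != 0 by rewrite eqz_nat -lt0n.
have Mp : 0 < M%:Z by rewrite ltz_nat.
have Hge := modz_ge0 z Mz; have Hlt := ltz_pmod z Mp.
exists `|(z %% M%:Z)%Z|%N, (z %/ M%:Z)%Z; split.
  by rewrite -ltz_nat gez0_abs.
by rewrite gez0_abs // {2}(divz_eq z M%:Z); ring.
Qed.


Lemma cpz_nat (a b : nat) : coprimez a%:Z b%:Z = coprime a b.
Proof. by rewrite coprimezE !absz_nat. Qed.

Lemma surj N p : (0 < N)%N -> primN N p ->
  exists c b : nat, goodpair N (c, b) /\ P1rel N p (c%:Z, (dN N c b)%:Z).
Proof.
case: p => x y N0; rewrite /primN /= => Hp.
have [g [M [x' [u [v [g0 M0 HN Hx Huv]]]]]] := gdec x N0.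
have [b [w [bM Hb]]] := mkbeta (u * y - g%:Z) M0.
have [A [B HAB]] := Bezoutz x y.
have [U [V HUV]] := Bezoutz (gcdz x y) N.
rewrite Hp -HAB in HUV.
have HNz : N%:Z = M%:Z * g%:Z by rewrite HN PoszM.
have HMg : (N %/ g)%N = M by rewrite HN mulnK.
have Hy : y = x' * (u * y) + (v * y) * M%:Z.
  by apply: (lin1 (c := - y) Huv); ring.
have Hcop : coprime (gcdn g b) M.
  apply/eqP; apply: gcd3_one => q qg qb qM.
  have quy : (q%:Z %| u * y)%Z.
    have -> : u * y = 1 * b%:Z + 1 * g%:Z + w * M%:Z by rewrite Hb; ring.
    by rewrite !rpredD ?dvdz_mull.
  have qy : (q%:Z %| y)%Z by rewrite Hy dvd_lin.
  have E1 : (U * A * x') * g%:Z + (U * B) * y + V * M%:Z * g%:Z = 1.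
    by apply: (lin3 (c := 1) (c' := - (U * A)) (c'' := - V) HUV Hx HNz); ring.
  suff H1 : (q%:Z %| (U * A * x') * g%:Z + (U * B) * y + V * M%:Z * g%:Z)%Z.
    by rewrite E1 in H1.
  by rewrite !rpredD ?dvdz_mull ?dvdz_mulr.
have Hgood : goodpair N (g, b).
  rewrite /goodpair HMg; split => //; first by rewrite HN dvdn_mull.
    by move: bM M0; clear; lia.
  exact/eqP.
exists g, b; split => //.
have [j Hj] := dN_form N g b.
apply: (@keyG N M%:Z g%:Z x y g%:Z (dN N g b)%:Z u HNz).
- exists v; by apply: (lin3 (c := - g%:Z) (c' := - u) (c'' := - v) Huv Hx HNz); ring.
- by exists x'.
- exists (j%:Z - w); rewrite Hj HMg !PoszD PoszM.
  by apply: (lin1 (c := 1) Hb); ring.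
- apply/cpW; exists (U * B), (U * A * x' + V * M%:Z).
  by apply: (lin3 (c := 1) (c' := - (U * A)) (c'' := - V) HUV Hx HNz); ring.
- by rewrite coprimez_sym cpz_nat dN_cop // HMg.
- by apply/cpW; exists x', v; rewrite (mulrC x').
Qed.

Lemma Apair_spec N l : (0 < N)%N -> IN N l ->
  goodpair N (Apair N l) /\
  cls N ((Apair N l).1%:Z, (dN N (Apair N l).1 (Apair N l).2)%:Z) = l.
Proof.
move=> N0 [p [Hp ->]]; rewrite /Apair.
apply: (epsilon_spec _ (fun cb => goodpair N cb /\ cls N ((cb.1)%:Z, (dN N cb.1 cb.2)%:Z) = cls N p)).
have [c [b [Hg HP]]] := surj N0 Hp.
by exists (c, b); split => //; apply/esym/cls_eq.
Qed.

Lemma Apair_cls N c b : (0 < N)%N -> goodpair N (c, b) ->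
  Apair N (cls N (c%:Z, (dN N c b)%:Z)) = (c, b).
Proof.
move=> N0 Hg.
have [] := @Apair_spec N (cls N (c%:Z, (dN N c b)%:Z)) N0.
  exists (c%:Z, (dN N c b)%:Z); split => //.
  move: Hg => [c0 _ _ Hc]; rewrite /primN /= /gcdz !absz_nat.
  have := dN_cop c0 (introT eqP Hc); rewrite /coprime => /eqP ->.
  by rewrite gcd1n.
case: (Apair N _) => c' b' /= Hg' E.
have H : P1rel N (c%:Z, (dN N c b)%:Z) (c'%:Z, (dN N c' b')%:Z).
  have : cls N (c'%:Z, (dN N c' b')%:Z) (c'%:Z, (dN N c' b')%:Z) by exact: P1_refl.
  by rewrite E.
by have [-> ->] := pair_inj N0 Hg Hg' H.
Qed.

Lemma IN_cls N c b : (0 < N)%N -> goodpair N (c, b) -> IN N (cls N (c%:Z, (dN N c b)%:Z)).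
Proof.
move=> N0 Hg; exists (c%:Z, (dN N c b)%:Z); split => //.
move: Hg => [c0 _ _ Hc]; rewrite /primN /= /gcdz !absz_nat.
have := dN_cop c0 (introT eqP Hc); rewrite /coprime => /eqP ->.
by rewrite gcd1n.
Qed.
Lemma det2 (A : 'M[int]_2) : \det A = A 0 0 * A 1 1 - A 0 1 * A 1 0.
Proof.
rewrite (expand_det_row _ 0) !big_ord_recr big_ord0 /= add0r /cofactor !det_mx11 !mxE /=.
have -> : (widen_ord (leqnSn 1) ord_max : 'I_2) = 0 by apply/val_inj.
have -> : (lift 0 (0 : 'I_1) : 'I_2) = 1 by apply/val_inj.
have -> : (lift ord_max (0 : 'I_1) : 'I_2) = 0 by apply/val_inj.
have -> : (ord_max : 'I_2) = 1 by apply/val_inj.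
rewrite expr0 expr1; ring.
Qed.

Lemma mx2E (a b c d : int) i j : mx2 a b c d i j =
  if i == 0 then (if j == 0 then a else b) else (if j == 0 then c else d).
Proof. by rewrite /mx2 mxE. Qed.

Lemma det_mx2 (a b c d : int) : \det (mx2 a b c d) = a * d - b * c.
Proof. by rewrite det2 !mx2E. Qed.

Lemma mul_mx2 (A B : 'M[int]_2) i j : (A *m B) i j = A i 0 * B 0 j + A i 1 * B 1 j.
Proof.
rewrite !mxE !big_ord_recr big_ord0 /= add0r.
have -> : (widen_ord (leqnSn 1) ord_max : 'I_2) = 0 by apply/val_inj.
by have -> : (ord_max : 'I_2) = 1 by apply/val_inj.
Qed.

Lemma mx2_eta (A : 'M[int]_2) : A = mx2 (A 0 0) (A 0 1) (A 1 0) (A 1 1).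
Proof.
apply/matrixP => i j; rewrite mx2E.
by case: i => [[|[|i]] Hi]; case: j => [[|[|j]] Hj] //=; congr (A _ _); apply/val_inj.
Qed.

Lemma lin1' (A B L R c : int) : A = B -> L - R = c * (A - B) -> L = R.
Proof. by move=> -> /eqP; rewrite subrr mulr0 subr_eq0 => /eqP. Qed.
Lemma lin2' (A B A' B' L R c c' : int) : A = B -> A' = B' ->
  L - R = c * (A - B) + c' * (A' - B') -> L = R.
Proof. by move=> -> -> /eqP; rewrite !subrr !mulr0 addr0 subr_eq0 => /eqP. Qed.

Lemma ordmax2 : (ord_max : 'I_2) = 1. Proof. by apply/val_inj. Qed.
Lemma ord02 : (ord0 : 'I_2) = 0. Proof. by apply/val_inj. Qed.

Lemma W_to (N g b M : nat) (R S : 'M[int]_2) : N = (M * g)%N ->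
  WN N *m R = S *m mx2 g%:Z b%:Z 0 M%:Z ->
  R 1 0 = S 0 0 * g%:Z /\ g%:Z * R 1 1 - R 1 0 * b%:Z = S 0 1 * N%:Z.
Proof.
move=> HN E.
have E00 := congr1 (fun A : 'M[int]_2 => A 0 0) E.
have E01 := congr1 (fun A : 'M[int]_2 => A 0 1) E.
rewrite /= /WN !mul_mx2 !mx2E /= in E00 E01.
split; first by apply: (lin1' (c := 1) E00); ring.
rewrite HN PoszM; apply: (lin2' (c := g%:Z) (c' := - b%:Z) E01 E00); ring.
Qed.

Lemma W_from (N g b M : nat) (R : 'M[int]_2) (c' t : int) : N = (M * g)%N -> (0 < g)%N ->
  SL2Z R -> R 1 0 = c' * g%:Z -> g%:Z * R 1 1 - R 1 0 * b%:Z = t * N%:Z ->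
  exists S, SL2Z S /\ WN N *m R = S *m mx2 g%:Z b%:Z 0 M%:Z.
Proof.
move=> HN g0 HR Hc Ht.
have Hd : R 1 1 = c' * b%:Z + t * M%:Z.
  apply: (mulIf (x := g%:Z)); first by rewrite eqz_nat -lt0n.
  by apply: (lin2' (c := 1) (c' := b%:Z) Ht Hc); rewrite HN PoszM; ring.
exists (mx2 c' t (- (M%:Z * R 0 0)) (R 0 0 * b%:Z - g%:Z * R 0 1)); split.
  rewrite /SL2Z det_mx2; move: HR; rewrite /SL2Z det2 => HR.
  by apply: (lin1' (c := 1) HR); rewrite Hd Hc; ring.
apply/matrixP => i j; rewrite /WN !mul_mx2 !mx2E.
have o2 : forall k : 'I_2, k = 0 \/ k = 1.
  case => [[|[|k]] Hk]; [left | right | by []]; exact/val_inj.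
case: (o2 i) => ->; case: (o2 j) => -> /=.
- by rewrite Hc; ring.
- by rewrite Hd; ring.
- by rewrite HN PoszM; ring.
- by rewrite HN PoszM; ring.
Qed.


Lemma primN_bez N x y : primN N (x, y) -> exists A B V : int, A * x + B * y + V * N%:Z = 1.
Proof.
rewrite /primN /= => Hp.
have [A [B HAB]] := Bezoutz x y.
have [U [V HUV]] := Bezoutz (gcdz x y) N.
rewrite Hp -HAB in HUV.
exists (U * A), (U * B), V; apply: (lin1 (c := 1) HUV); ring.
Qed.

Lemma lift_rep N p : (0 < N)%N -> primN N p ->
  exists R : 'M[int]_2, SL2Z R /\ P1rel N p (R 1 0, R 1 1).
Proof.
case: p => x y N0 Hp.
have [A [B [V HB]]] := primN_bez Hp.
have Nz : N%:Z != 0 by rewrite eqz_nat -lt0n.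
set y' : int := if y == 0 then N%:Z else y.
have y'0 : y' != 0 by rewrite /y'; case: (y =P 0) => [_|/eqP //].
have Hyy : exists e : int, y' - y = e * N%:Z.
  by rewrite /y'; case: (y =P 0) => [->|_]; [exists 1 | exists 0]; ring.
have [e He] := Hyy.
set Y := `|y'|%N.
have Y0 : (0 < Y)%N by rewrite absz_gt0.
have Hge := modz_ge0 x Nz.
set x0 := `|(x %% N%:Z)%Z|%N.
have Hx0 : x0%:Z = x - (x %/ N%:Z)%Z * N%:Z by rewrite gez0_abs // {2}(divz_eq x N%:Z); ring.
have Hc : coprime (gcdn Y x0) N.
  apply/eqP; apply: gcd3_one => q qY qx qN.
  have qy' : (q%:Z %| y')%Z by move: qY; rewrite !dvdzE.
  have qx' : (q%:Z %| x)%Z.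
    have -> : x = 1 * x0%:Z + (x %/ N%:Z)%Z * N%:Z by rewrite Hx0; ring.
    by rewrite dvd_lin.
  have qy : (q%:Z %| y)%Z.
    have -> : y = 1 * y' + (- e) * N%:Z by apply: (lin1 (c := -1) He); ring.
    by rewrite dvd_lin.
  suff H1 : (q%:Z %| A * x + B * y + V * N%:Z)%Z by rewrite HB in H1.
  by rewrite !rpredD ?dvdz_mull.
have [t Ht] := GL Y0 Hc.
set c : int := (x0 + t * N)%N%:Z.
have Hcop : coprimez c y' by rewrite coprimezE absz_nat coprime_sym.
have [u [v Huv]] := Bezoutz c y'.
move: Huv; rewrite (eqP Hcop) => Huv.
exists (mx2 v (- u) c y'); split.
  rewrite /SL2Z det_mx2 -Huv; ring.
rewrite !mx2E /=.
apply/P1E; exists 1; split; first by apply/cpW; exists 1, 0; ring.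
split => /=.
  exists (t%:Z - (x %/ N%:Z)%Z); rewrite /c PoszD PoszM.
  by apply: (lin1 (c := 1) Hx0); ring.
by exists e; rewrite mul1r.
Qed.

Lemma Rrep_spec N C : (0 < N)%N -> IN N C ->
  SL2Z (Rrep N C) /\ C (Rrep N C 1 0, Rrep N C 1 1).
Proof.
move=> N0 [p [Hp ->]].
have [R [HR HP]] := lift_rep N0 Hp.
have H := epsilon_spec (inhabits (1%:M : 'M[int]_2))
  (fun R => SL2Z R /\ cls N p (R ord_max ord0, R ord_max ord_max)).
have E : forall R : 'M[int]_2, R 1 0 = R ord_max ord0 /\ R 1 1 = R ord_max ord_max.
  by move=> R'; rewrite ordmax2 ord02.
have [E1 E2] := E (Rrep N (cls N p)); rewrite E1 E2; apply: H.
by exists R; rewrite ordmax2 ord02.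
Qed.

Lemma hN_props N C : (0 < N)%N -> SL2Z (Rrep N C) ->
  exists g b : nat, goodpair N (g, b) /\ hN N C = cls N (g%:Z, (dN N g b)%:Z) /\
    (exists c' : int, Rrep N C 1 0 = c' * g%:Z) /\
    (exists t : int, g%:Z * Rrep N C 1 1 - Rrep N C 1 0 * b%:Z = t * N%:Z).
Proof.
move=> N0 HR.
set R := Rrep N C.
have HRd : R 0 0 * R 1 1 - R 0 1 * R 1 0 = 1 by move: HR; rewrite /SL2Z det2.
have Hex : exists l, IN N l /\ exists S, SL2Z S /\ WN N *m R = S *m Amat N l.
  have [g [M [c' [u [v [g0 M0 HN Hc Huv]]]]]] := gdec (R 1 0) N0.
  have [b [w [bM Hb]]] := mkbeta (u * R 1 1) M0.
  have HMg : (N %/ g)%N = M by rewrite HN mulnK.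
  have HNz : N%:Z = M%:Z * g%:Z by rewrite HN PoszM.
  have Hgood : goodpair N (g, b).
    rewrite /goodpair HMg; split => //; first by rewrite HN dvdn_mull.
      by move: bM M0; clear; lia.
    apply: gcd3_one => q qg qb qM.
    have qud : (u * R 1 1 \in dvdz q%:Z).
      have -> : u * R 1 1 = 1 * b%:Z + w * M%:Z by rewrite Hb; ring.
      by rewrite dvd_lin.
    have qd : (R 1 1 \in dvdz q%:Z).
      have -> : R 1 1 = c' * (u * R 1 1) + (v * R 1 1) * M%:Z.
        by apply: (lin1 (c := - R 1 1) Huv); ring.
      by rewrite dvd_lin.
    have qc : (R 1 0 \in dvdz q%:Z) by rewrite Hc dvdz_mull.
    suff H1 : (R 0 0 * R 1 1 - R 0 1 * R 1 0 \in dvdz q%:Z) by rewrite HRd in H1.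
    by rewrite rpredB ?dvdz_mull.
  exists (cls N (g%:Z, (dN N g b)%:Z)); split; first exact: IN_cls.
  rewrite /Amat Apair_cls // HMg.
  apply: (W_from (c' := c') (t := R 1 1 * v + c' * w) HN g0 HR Hc).
  by apply: (lin3 (c := - (g%:Z * R 1 1)) (c' := - (u * R 1 1 - w * M%:Z)) (c'' := - (R 1 1 * v + c' * w)) Huv Hc HNz); rewrite Hb; ring.
have [Hl [S [HS HW]]] : IN N (hN N C) /\ exists S, SL2Z S /\ WN N *m R = S *m Amat N (hN N C).
  exact: (epsilon_spec _ _ Hex).
have [Hg Hcl] := Apair_spec N0 Hl.
move: Hg Hcl HW; rewrite /Amat; case: (Apair N (hN N C)) => g b /= Hg Hcl HW.
exists g, b; split => //; split; first by rewrite Hcl.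
have [g0 gN _ _] := Hg.
have [H1 H2] := W_to (esym (divnK gN)) HW.
by split; [exists (S 0 0) | exists (S 0 1)].
Qed.


Lemma lin4 (A B A' B' A'' B'' A3 B3 L R c c' c'' c3 : int) : A = B -> A' = B' -> A'' = B'' -> A3 = B3 ->
  L - R = c * (A - B) + c' * (A' - B') + c'' * (A'' - B'') + c3 * (A3 - B3) -> L = R.
Proof. by move=> -> -> -> -> /eqP; rewrite !subrr !mulr0 !addr0 subr_eq0 => /eqP. Qed.
Lemma lin5 (A B A' B' A'' B'' A3 B3 A4 B4 L R c c' c'' c3 c4 : int) :
  A = B -> A' = B' -> A'' = B'' -> A3 = B3 -> A4 = B4 ->
  L - R = c * (A - B) + c' * (A' - B') + c'' * (A'' - B'') + c3 * (A3 - B3) + c4 * (A4 - B4) -> L = R.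
Proof. by move=> -> -> -> -> -> /eqP; rewrite !subrr !mulr0 !addr0 subr_eq0 => /eqP. Qed.

Lemma FA (n : nat) (m g G n' w c'' d c1' d1 k s s' b1 t1 b2 t2 j1 j2 A0 B0 A1 B1 : int) :
  g != 0 -> G != 0 -> n%:Z = n' * g ->
  A0 * (c'' * G) + B0 * d = 1 -> A1 * (c1' * g) + B1 * d1 = 1 ->
  coprimez k n%:Z ->
  c1' * g - k * (c'' * G) = s * (n' * g) ->
  d1 - k * d = s' * (n' * g) ->
  g * d1 - c1' * g * b1 = t1 * (n' * g) ->
  coprimez (g + b1 + j1 * n') g ->
  n' * g * m = w * G ->
  G * d - c'' * G * b2 = t2 * (n' * g * m) ->
  coprimez (G + b2 + j2 * w) G ->
  P1rel n (G, G + b2 + j2 * w) (g, g + b1 + j1 * n').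
Proof.
move=> Hg HG Hn Hcd Hc1d1 Hk Hs Hs' Ht1 Hcop1 Hw Ht2 Hcop2.
have E1 : d1 - c1' * b1 = t1 * n'.
  by apply: (mulIf Hg); apply: (lin1 (c := 1) Ht1); ring.
have E2 : d - c'' * b2 = t2 * w.
  by apply: (mulIf HG); apply: (lin2 (c := 1) (c' := t2) Ht2 Hw); ring.
move: Hk; rewrite Hn => /cpW [K [L HKL]].
set cg := K * (c1' - s * n') + L * n' * (c'' * G).
have E3 : c'' * G = cg * g.
  by apply: (lin2 (c := - (c'' * G)) (c' := - K) HKL Hs); rewrite /cg; ring.
set e := G * A0 * cg + B0 * (cg * b2 + t2 * n' * m).
have E4 : G = e * g.
  by apply: (lin3 (c := - G) (c' := B0) (c'' := G * A0 + B0 * b2) Hcd Ht2 E3); rewrite /e; ring.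
have E5 : c1' = k * c'' * e + s * n'.
  by apply: (mulIf Hg); apply: (lin2 (c := 1) (c' := k * c'') Hs E4); ring.
set X := A1 * g + B1 * b1.
have E6 : X * c1' + (B1 * t1) * n' = 1.
  by apply: (lin2 (c := 1) (c' := - B1) Hc1d1 E1); rewrite /X; ring.
set u := X * k * c''.
set v := X * s + B1 * t1.
have E7 : u * e + v * n' = 1.
  by apply: (lin2 (c := 1) (c' := - X) E6 E5); rewrite /u /v; ring.
have E8 : n' * m = w * e.
  by apply: (mulIf Hg); apply: (lin2 (c := 1) (c' := w) Hw E4); ring.
set z := u * m + v * w.
have E9 : w = n' * z.
  by apply: (lin2 (c := - w) (c' := - u) E7 E8); rewrite /z; ring.
have E10 : (A0 * G + B0 * b2) * c'' + (B0 * t2 * z) * n' = 1.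
  by apply: (lin3 (c := 1) (c' := - B0) (c'' := - (B0 * t2)) Hcd E2 E9); ring.
have E11 : K * k + (L * g) * n' = 1.
  by apply: (lin1 (c := 1) HKL); ring.
have E12 : exists h, e * b1 - b2 = h * n'.
  have Hdiv : (n' %| (k * c'') * (e * b1 - b2))%Z.
    apply/dvdzP; exists (s' * g - t1 - s * b1 + k * t2 * z).
    by apply: (lin5 (c := - b1) (c' := - 1) (c'' := 1) (c3 := k) (c4 := k * t2) E5 E1 Hs' E2 E9); ring.
  have Hcp : coprimez n' (k * c'').
    rewrite coprimez_sym coprimezMl; apply/andP; split; apply/cpW.
      by exists K, (L * g).
    by exists (A0 * G + B0 * b2), (B0 * t2 * z).
  by move: Hdiv; rewrite Gauss_dvdzr // => /dvdzP.
have [h Hh] := E12.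
apply: (@keyG n n' g G (G + b2 + j2 * w) g (g + b1 + j1 * n') u Hn).
- exists v; rewrite Hn.
  by apply: (lin2 (c := - g) (c' := - u) E7 E4); ring.
- by exists e.
- exists (j1 + g * v + v * b1 + u * h - u * j2 * z).
  by apply: (lin4 (c := - u) (c' := u) (c'' := - (u * j2)) (c3 := - (g + b1)) E4 Hh E9 E7); ring.
- by move: Hcop2; rewrite {2}E4 coprimezMr => /andP[].
- exact: Hcop1.
- by apply/cpW; exists e, v; rewrite mulrC.
Qed.


Lemma Rrep_wit N C (R : 'M[int]_2) : SL2Z R -> C (R 1 0, R 1 1) ->
  SL2Z (Rrep N C) /\ C (Rrep N C 1 0, Rrep N C 1 1).
Proof.
move=> HR HC.
have H := epsilon_spec (inhabits (1%:M : 'M[int]_2))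
  (fun R => SL2Z R /\ C (R ord_max ord0, R ord_max ord_max)).
have E : forall R : 'M[int]_2, R 1 0 = R ord_max ord0 /\ R 1 1 = R ord_max ord_max.
  by move=> R'; rewrite ordmax2 ord02.
have [E1 E2] := E (Rrep N C); rewrite E1 E2; apply: H.
by exists R; rewrite ordmax2 ord02.
Qed.

Theorem mainTheorem16 (n m : nat) (i : pairset) :
  (0 < n)%N -> (0 < m)%N -> IN (n * m) i ->
  hN n (sigma m n i) = sigma m n (hN (n * m) i).
Proof.
move=> n0 m0 Hi.
have N0 : (0 < n * m)%N by rewrite muln_gt0 n0 m0.
have [HR2 Hi2] := Rrep_spec N0 Hi.
set R2 := Rrep (n * m) i in HR2 Hi2.
have Ei : i = cls (n * m) (R2 1 0, R2 1 1).
  by move: Hi Hi2 => [p [_ ->]] Hp; apply: cls_eq.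
have Hs : sigma m n i = cls n (R2 1 0, R2 1 1) by rewrite Ei sigma_cls.
have [HR1 Hi1] := @Rrep_wit n (sigma m n i) R2 HR2 (ltac:(rewrite Hs; exact: P1_refl)).
set R1 := Rrep n (sigma m n i) in HR1 Hi1.
have [g [b1 [Hg1 [Eh1 [[c1' Hc1] [t1 Ht1]]]]]] := hN_props n0 HR1.
have [G [b2 [Hg2 [Eh2 [[c'' Hc2] [t2 Ht2]]]]]] := hN_props N0 HR2.
rewrite -/R1 in Eh1 Hc1 Ht1; rewrite -/R2 in Eh2 Hc2 Ht2.
rewrite Eh1 Eh2 sigma_cls; apply/esym/cls_eq.
move: Hi1; rewrite Hs => /P1E [k [Hk [[s Hs1] [s' Hs2]]]].
rewrite /= in Hs1 Hs2.
have [j1 Hj1] := dN_form n g b1; have [j2 Hj2] := dN_form (n * m) g b2.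
have [j2' Hj2'] := dN_form (n * m) G b2.
have [g0 gn _ Hc1g] := Hg1; have [G0 GN _ Hc2g] := Hg2.
have Hcop1 := dN_cop g0 (introT eqP Hc1g).
have Hcop2 := dN_cop G0 (introT eqP Hc2g).
rewrite -cpz_nat coprimez_sym Hj1 !PoszD PoszM in Hcop1.
rewrite -cpz_nat coprimez_sym Hj2' !PoszD PoszM in Hcop2.
rewrite Hj1 Hj2' !PoszD !PoszM.
have Hn : n%:Z = (n %/ g)%N%:Z * g%:Z by rewrite -PoszM divnK.
have Hw : (n %/ g)%N%:Z * g%:Z * m%:Z = (n * m %/ G)%N%:Z * G%:Z.
  by rewrite -!PoszM divnK // divnK.
have Hd2 : R2 0 0 * R2 1 1 - R2 0 1 * R2 1 0 = 1 by move: HR2; rewrite /SL2Z det2.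
have Hd1 : R1 0 0 * R1 1 1 - R1 0 1 * R1 1 0 = 1 by move: HR1; rewrite /SL2Z det2.
apply: (FA (A0 := - R2 0 1) (B0 := R2 0 0) (A1 := - R1 0 1) (B1 := R1 0 0)
          (k := k) (s := s) (s' := s') (t1 := t1) (t2 := t2) (c1' := c1') (c'' := c'')
          (d := R2 1 1) (d1 := R1 1 1)).
- by rewrite eqz_nat -lt0n.
- by rewrite eqz_nat -lt0n.
- exact: Hn.
- by rewrite -Hc2 -Hd2; ring.
- by rewrite -Hc1 -Hd1; ring.
- exact: Hk.
- by rewrite -Hc1 -Hc2 -Hn.
- by rewrite -Hn.
- by rewrite -Hc1 -Hn.
- exact: Hcop1.
- exact: Hw.
- by rewrite -Hc2 -Hn -PoszM.
- exact: Hcop2.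
Qed.
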